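(* Let $X$ be a real Banach space, $V$ a closed subset of $X$, $F=\{x_1,\dots,x_N\}$ a finite subset of $X$, and $f:[0,\infty)^N\to[0,\infty)$ a convex monotone function. Then every sequence $(v_n)\subseteq V$ with $r_f(v_n,F)\to\mathrm{rad}_V^f(F)$ is convergent if and only if for every $\varepsilon>0$ there exists $\delta>0$ such that $\mathrm{diam}(\delta\text{-}\mathrm{Cent}_V^f(F))<\varepsilon$.
   Context: $f$ is monotone if $a\le b$ coordinatewise implies $f(a)\le f(b)$. $r_f(x,F)=f(\|x-x_1\|,\dots,\|x-x_N\|)$, $\mathrm{rad}_V^f(F)=\inf_{v\in V}r_f(v,F)$, and $\delta\text{-}\mathrm{Cent}_V^f(F)=\{v\in V:r_f(v,F)\le\mathrm{rad}_V^f(F)+\delta\}$; $\mathrm{diam}$ denotes the diameter of a set. *)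

(* Defs.v *)
From HB Require Import structures.
From mathcomp Require Import all_boot all_order all_algebra.
From mathcomp Require Import all_classical all_reals all_analysis.
Set Implicit Arguments. Unset Strict Implicit. Unset Printing Implicit Defensive.
Import Order.TTheory GRing.Theory Num.Theory.
Import numFieldNormedType.Exports.
Local Open Scope classical_set_scope.
Local Open Scope ring_scope.

Definition nonneg_vec (R : realType) (N : nat) (a : 'I_N -> R) : Prop :=
  forall i, 0 <= a i.

Definition nonneg_on_orthant (R : realType) (N : nat) (f : ('I_N -> R) -> R) : Prop :=
  forall a, nonneg_vec a -> 0 <= f a.

Definition convex_on_orthant (R : realType) (N : nat) (f : ('I_N -> R) -> R) : Prop :=
  forall a b (t : R), nonneg_vec a -> nonneg_vec b -> 0 <= t -> t <= 1 ->
    f (fun i => t * a i + (1 - t) * b i) <= t * f a + (1 - t) * f b.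

Definition monotone_on_orthant (R : realType) (N : nat) (f : ('I_N -> R) -> R) : Prop :=
  forall a b, nonneg_vec a -> nonneg_vec b -> (forall i, a i <= b i) -> f a <= f b.

Definition r_f (R : realType) (X : normedModType R) (N : nat)
  (f : ('I_N -> R) -> R) (F : 'I_N -> X) (x : X) : R :=
  f (fun i => `|x - F i|).

Definition rad_f (R : realType) (X : normedModType R) (N : nat)
  (f : ('I_N -> R) -> R) (V : set X) (F : 'I_N -> X) : R :=
  inf [set r_f f F v | v in V].

Definition cent_f (R : realType) (X : normedModType R) (N : nat)
  (f : ('I_N -> R) -> R) (V : set X) (F : 'I_N -> X) (delta : R) : set X :=
  [set v | V v /\ r_f f F v <= rad_f f V F + delta].

(* diameter of a set, in the extended reals (+oo if unbounded, -oo if empty) *)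
Definition diam (R : realType) (X : normedModType R) (A : set X) : \bar R :=
  ereal_sup [set (`|a - b|)%:E | a in A & b in A].

(* Main.v *)
Require Import Defs.
From HB Require Import structures.
From mathcomp Require Import all_boot all_order all_algebra.
From mathcomp Require Import all_classical all_reals all_analysis.
From mathcomp Require Import lra zify.
Import Order.TTheory GRing.Theory Num.Theory.
Import numFieldNormedType.Exports.
Local Open Scope classical_set_scope.
Local Open Scope ring_scope.

Lemma rad_lb (R : realType) (X : completeNormedModType R) (V : set X)
  (N : nat) (F : 'I_N -> X) (f : ('I_N -> R) -> R) v :
  nonneg_on_orthant f -> V v -> rad_f f V F <= r_f f F v.
Proof.
move=> nn Vv; rewrite /rad_f; apply: inf_lbound; last by exists v.
exists 0 => _ [w _ <-]; apply: nn => i; exact: normr_ge0.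
Qed.

Lemma diam_ub (R : realType) (X : completeNormedModType R) (A : set X) a b :
  A a -> A b -> ((`|a - b|)%:E <= diam A)%E.
Proof. by move=> Aa Ab; apply: ereal_sup_ubound; exists a => //; exists b. Qed.

Lemma dir2 (R : realType) (X : completeNormedModType R) (V : set X)
  (N : nat) (F : 'I_N -> X) (f : ('I_N -> R) -> R) :
   (forall eps : R, 0 < eps -> exists2 delta : R, 0 < delta &
      (diam (cent_f f V F delta) < eps%:E)%E) ->
  (forall v : nat -> X, (forall n, V (v n)) ->
      (r_f f F (v n) @[n --> \oo] --> rad_f f V F) -> cvg (v @ \oo)).
Proof.
move=> H v Vv /cvgrPdist_lt hr.
apply/cauchy_cvgP/cauchy_ballP => e e0.
have [d d0 hd] := H e e0.
have hc : \forall n \near \oo, cent_f f V F d (v n).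
  apply: filterS (hr d d0) => n hn; split => //.
  move: hn; rewrite ltr_norml; lra.
near=> x y.
have cx : cent_f f V F d x by near: x; exact: hc.
have cy : cent_f f V F d y by near: y; exact: hc.
rewrite /= -ball_normE /=.
have := Order.POrderTheory.le_lt_trans (@diam_ub _ _ _ _ _ cx cy) hd; by rewrite lte_fin.
Unshelve. all: by end_near. Qed.


Lemma dir1 (R : realType) (X : completeNormedModType R) (V : set X)
  (N : nat) (F : 'I_N -> X) (f : ('I_N -> R) -> R) :
  nonneg_on_orthant f ->
  (forall v : nat -> X, (forall n, V (v n)) ->
      (r_f f F (v n) @[n --> \oo] --> rad_f f V F) -> cvg (v @ \oo)) ->
   (forall eps : R, 0 < eps -> exists2 delta : R, 0 < delta &
      (diam (cent_f f V F delta) < eps%:E)%E).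
Proof.
move=> nn H eps eps0.
have [//|hne] := pselect (exists2 delta : R, 0 < delta &
      (diam (cent_f f V F delta) < eps%:E)%E).
have hg : forall n : nat, exists p : X * X,
    [/\ cent_f f V F (n.*2.+2%:R^-1) p.1, cent_f f V F (n.*2.+2%:R^-1) p.2
      & eps / 2 < `|p.1 - p.2|].
  move=> n.
  have d0 : 0 < (n.*2.+2%:R^-1 : R) by rewrite invr_gt0 ltr0n.
  have hd : (eps%:E <= diam (cent_f f V F (n.*2.+2%:R^-1)))%E.
    rewrite leNgt; apply/negP => hlt; apply: hne; by exists (n.*2.+2%:R^-1).
  have : ((eps / 2)%:E < diam (cent_f f V F (n.*2.+2%:R^-1)))%E.
    apply: Order.POrderTheory.lt_le_trans hd; rewrite lte_fin; lra.
  move/ereal_sup_gt => [_ [a Aa [b Ab <-]]]; rewrite lte_fin => hab.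
  by exists (a, b).
have [g hgP] := choice hg.
pose w k := if odd k then (g k./2).2 else (g k./2).1.
have hw : forall k, cent_f f V F (k.+1%:R^-1) (w k).
  move=> k.
  have hk : (k.+1 <= (k./2).*2.+2)%N.
    rewrite -{1}(odd_double_half k); case: (odd k) => /=; lia.
  have hle : ((k./2).*2.+2%:R^-1 : R) <= k.+1%:R^-1.
    by rewrite lef_pV2 ?posrE ?ltr0n // ler_nat.
  have [c1 c2 _] := hgP k./2.
  rewrite /w; case: (odd k); [case: c2 | case: c1] => Vx hx; split => //;
    by apply: Order.POrderTheory.le_trans hx _; rewrite lerD2l.
have Vw : forall k, V (w k) by move=> k; case: (hw k).
have := H w Vw.
have -> : (r_f f F (w n) @[n --> \oo] --> rad_f f V F) = True.
  apply/propT/cvgrPdist_lt => e e0.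
  near=> k.
  have lb := @rad_lb _ _ _ _ F _ _ nn (Vw k).
  have [_ ub] := hw k.
  have he : k.+1%:R^-1 < e.
    near: k; exact: (near_infty_natSinv_lt (PosNum e0)).
  rewrite distrC ger0_norm ?subr_ge0 //.
  rewrite ltrBlDl; apply: Order.POrderTheory.le_lt_trans ub _; by rewrite ltrD2l.
move=> /(_ I) /cvg_ex [l /cvgrPdist_lt hl].
have e4 : 0 < eps / 4 by lra.
have [M _ hM] := hl _ e4.
have [_ _ hab] := hgP M.
have h1 : w M.*2 = (g M).1 by rewrite /w odd_double doubleK.
have h2 : w M.*2.+1 = (g M).2 by rewrite /w /= odd_double /=; congr (g _).2; exact: (half_bit_double M true).
have le1 : (M <= M.*2)%N by rewrite -addnn leq_addl.
have le2 : (M <= M.*2.+1)%N by apply: leq_trans le1 (leqnSn _).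
have := hM M.*2 le1; rewrite h1 => ha.
have := hM M.*2.+1 le2; rewrite h2 => hb.
have hsum : `|(g M).1 - (g M).2| < eps/4 + eps/4.
  apply: Order.POrderTheory.le_lt_trans (ler_distD l _ _) _.
  by rewrite distrC; apply: ltrD.
have e2 : eps/4 + eps/4 = eps/2 by lra.
move: hab; rewrite -e2 => /(Order.POrderTheory.lt_trans hsum).
by rewrite Order.POrderTheory.ltxx.
Unshelve. all: by end_near. Qed.

Theorem theorem3p10 (R : realType) (X : completeNormedModType R) (V : set X)
  (N : nat) (F : 'I_N -> X) (f : ('I_N -> R) -> R) :
  closed V ->
  nonneg_on_orthant f -> convex_on_orthant f -> monotone_on_orthant f ->
  ((forall v : nat -> X, (forall n, V (v n)) ->
      (r_f f F (v n) @[n --> \oo] --> rad_f f V F) -> cvg (v @ \oo))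
   <->
   (forall eps : R, 0 < eps -> exists2 delta : R, 0 < delta &
      (diam (cent_f f V F delta) < eps%:E)%E)).
Proof.
move=> _ nn _ _; split; [exact: dir1 | exact: dir2].
Qed.
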